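(* Let $(G,\cdot,N,\star,\odot)$ be a left bracoid (a left skew bracoid with $(N,\star)$ abelian) and $(H,\circ)$ a group. Assume (a) $\boxdot$ is a transitive right action of $(H,\circ)$ on $N$ such that $g\odot(\eta\boxdot h)=(g\odot\eta)\boxdot h$ for all $g\in G$, $h\in H$, $\eta\in N$; and (b) ${}^{\alpha(g)}(\eta^{\beta(h)})=({}^{\alpha(g)}\eta)^{\beta(h)}$ for all $g\in G$, $h\in H$, $\eta\in N$. Then $(G,\cdot,\odot,H,\circ,\boxdot,N,\star)$ is a two-sided bracoid; in particular $(\eta\star\mu)\boxdot h=(\eta\boxdot h)\star\overline{(e_N\boxdot h)}\star(\mu\boxdot h)$ for all $\eta,\mu\in N$, $h\in H$.
   Context: For a group $(N,\star)$, $e_N$ denotes its identity and $\overline{\eta}$ the inverse of $\eta$. A left skew bracoid is $(G,\cdot,N,\star,\odot)$ with $(G,\cdot),(N,\star)$ groups and $\odot$ a transitive left action of $G$ on $N$ with $g\odot(\mu\star\eta)=(g\odot\mu)\star\overline{(g\odot e_N)}\star(g\odot\eta)$ for all $g\in G$, $\mu,\eta\in N$. A right skew bracoid is $(H,\circ,N,\star,\boxdot)$ with $(H,\circ),(N,\star)$ groups and $\boxdot$ a transitive right action of $H$ on $N$ with $(\eta\star\mu)\boxdot h=(\eta\boxdot h)\star\overline{(e_N\boxdot h)}\star(\mu\boxdot h)$ for all $h\in H$, $\eta,\mu\in N$. A two-sided bracoid $(G,\cdot,\odot,H,\circ,\boxdot,N,\star)$ consists of a left skew bracoid $(G,\cdot,N,\star,\odot)$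 and a right skew bracoid $(H,\circ,N,\star,\boxdot)$ with $(N,\star)$ abelian such that $g\odot(\eta\boxdot h)=(g\odot\eta)\boxdot h$ for all $g\in G,h\in H,\eta\in N$. For $g\in G$, ${}^{\alpha(g)}\eta=\overline{(g\odot e_N)}\star(g\odot\eta)\star\overline{\eta}$. For $h\in H$, $\eta^{\beta(h)}=\overline{\eta}\star(\eta\boxdot h)\star\overline{(e_N\boxdot h)}$. *)

(* Defs.v *)
Record is_group {T : Type} (mul : T -> T -> T) (e : T) (inv : T -> T) : Prop := {
  grp_assoc : forall x y z, mul x (mul y z) = mul (mul x y) z;
  grp_mul1x : forall x, mul e x = x;
  grp_mulx1 : forall x, mul x e = x;
  grp_mulVx : forall x, mul (inv x) x = e;
  grp_mulxV : forall x, mul x (inv x) = e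
}.

Definition is_abelian {T : Type} (mul : T -> T -> T) : Prop :=
  forall x y, mul x y = mul y x.

Definition is_left_action {G N : Type} (mulG : G -> G -> G) (eG : G)
  (act : G -> N -> N) : Prop :=
  (forall x, act eG x = x) /\
  (forall g g' x, act (mulG g g') x = act g (act g' x)).

Definition is_right_action {H N : Type} (mulH : H -> H -> H) (eH : H)
  (ract : N -> H -> N) : Prop :=
  (forall x, ract x eH = x) /\
  (forall h h' x, ract x (mulH h h') = ract (ract x h) h').

Definition left_transitive {G N : Type} (act : G -> N -> N) : Prop :=
  forall x y : N, exists g, act g x = y.

Definition right_transitive {H N : Type} (ract : N -> H -> N) : Prop :=
  forall x y : N, exists h, ract x h = y.

Definition left_skew_bracoid {G N : Type}
  (mulG : G -> G -> G) (eG : G) (invG : G -> G)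
  (star : N -> N -> N) (eN : N) (invN : N -> N)
  (act : G -> N -> N) : Prop :=
  is_group mulG eG invG /\ is_group star eN invN /\
  is_left_action mulG eG act /\ left_transitive act /\
  (forall g mu eta,
     act g (star mu eta) = star (star (act g mu) (invN (act g eN))) (act g eta)).

Definition left_bracoid {G N : Type}
  (mulG : G -> G -> G) (eG : G) (invG : G -> G)
  (star : N -> N -> N) (eN : N) (invN : N -> N)
  (act : G -> N -> N) : Prop :=
  left_skew_bracoid mulG eG invG star eN invN act /\ is_abelian star.

Definition right_skew_bracoid {H N : Type}
  (mulH : H -> H -> H) (eH : H) (invH : H -> H)
  (star : N -> N -> N) (eN : N) (invN : N -> N)
  (ract : N -> H -> N) : Prop :=
  is_group mulH eH invH /\ is_group star eN invN /\
  is_right_action mulH eH ract /\ right_transitive ract /\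
  (forall h eta mu,
     ract (star eta mu) h = star (star (ract eta h) (invN (ract eN h))) (ract mu h)).

Definition two_sided_bracoid {G H N : Type}
  (mulG : G -> G -> G) (eG : G) (invG : G -> G) (act : G -> N -> N)
  (mulH : H -> H -> H) (eH : H) (invH : H -> H) (ract : N -> H -> N)
  (star : N -> N -> N) (eN : N) (invN : N -> N) : Prop :=
  left_skew_bracoid mulG eG invG star eN invN act /\
  right_skew_bracoid mulH eH invH star eN invN ract /\
  is_abelian star /\
  (forall g h eta, act g (ract eta h) = ract (act g eta) h).

Definition alpha {G N : Type} (star : N -> N -> N) (eN : N) (invN : N -> N)
  (act : G -> N -> N) (g : G) (eta : N) : N :=
  star (star (invN (act g eN)) (act g eta)) (invN eta).

Definition beta {H N : Type} (star : N -> N -> N) (eN : N) (invN : N -> N)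
  (ract : N -> H -> N) (h : H) (eta : N) : N :=
  star (star (invN eta) (ract eta h)) (invN (ract eN h)).

(* Main.v *)
From Pilot Require Import Defs.
From HB Require Import structures.
From mathcomp Require Import all_boot all_algebra.
From mathcomp Require Import boolp.
Import GRing.Theory.
Local Open Scope ring_scope.

Ltac zprep := apply/eqP; rewrite -subr_eq0 ?opprD ?opprK -?addrA.
Ltac zc t := rewrite ?(addrCA _ t) ?(addrC _ t) ?(addrCA _ (- t)) ?(addrC _ (- t)) ?addKr ?addNr ?addr0.

Lemma abstract_additive (V : zmodType) (l : V -> V -> V)
  (hl : forall x y z, l x (y + z) = l x y + l x z)
  (h0 : forall z, l 0 z = 0)
  (hG : forall x y z, l (x + y + l x y) z = l x z + l y z + l x (l y z))
  (hA : forall x y z, l (l x y) z = l x (l y z))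
  (hI : forall x w, exists b, b + l x b = w)
  (hE : forall b, exists c, c + l c b = b) :
  forall x y z, l (x + y) z = l x z + l y z.
Proof.
have l0 : forall x, l x 0 = 0.
  by move=> x; apply: (addrI (l x 0)); rewrite -hl !addr0.
have lN : forall x y, l x (- y) = - l x y.
  move=> x y; apply/eqP; rewrite -subr_eq0 opprK -hl addNr l0 //.
have Lneg : forall a z, l (- a) z = - l a z.
  move=> a z; have := hG a (- a) z.
  rewrite subrr add0r hA => /(congr1 (fun t => t - l a (l (- a) z))).
  rewrite subrr addrK => /eqP; rewrite eq_sym addrC addr_eq0 => /eqP //.
have Ldbl : forall b z, l (b + b) z = l b z + l b z.
  move=> b z; have [x hx] := hI b b.
  have e1 := hG b x z.
  have e2 := hG b (- x) z.
  rewrite -addrA hx in e1.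
  rewrite lN -addrA -opprD hx subrr h0 Lneg lN in e2.
  rewrite e1 -addrA; congr (_ + _).
  apply/eqP; rewrite eq_sym -subr_eq0 opprD addrA; apply/eqP; by rewrite -e2.
have Q : forall a b z, l (b + l a b) z = l b z + l (l a b) z.
  move=> a b z; have [c hc] := hE b.
  have lcb : l c b = b - c by apply/eqP; rewrite eq_sym subr_eq addrC hc.
  have key : l b z = l c z + l (b - c) z.
    have := hG c b z; rewrite -hA -addrA (addrC b) addrA hc lcb Ldbl.
    by rewrite (addrC (l c z) (l b z)) -addrA => /addrI.
  have pq : l a c + l a (b - c) = l a b by rewrite -hl addrC subrK.
  have e := hG (l a c) b z.
  have t3 : l (l a c) (l b z) = l (l a (l c b)) z by rewrite !hA.
  rewrite t3 [l (l a c) b]hA lcb in e.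
  have arg : l a c + b + l a (b - c) = b + l a b by rewrite (addrC (l a c)) -addrA pq.
  rewrite arg in e.
  rewrite e !hA (addrC (l a (l c z))) -addrA -hl -key //.
move=> x y z.
have [b hb] := hI x y.
have := hG x b z.
by rewrite -addrA hb -hA -addrA -Q hb.
Qed.
Lemma core (V : zmodType) (G H : Type) (mulG : G -> G -> G) (eG : G) (invG : G -> G)
  (act : G -> V -> V) (ract : V -> H -> V)
  (hact1 : forall x, act eG x = x)
  (hactM : forall g g' x, act (mulG g g') x = act g (act g' x))
  (hinv : forall g, mulG g (invG g) = eG)
  (htr : forall x y, exists g, act g x = y)
  (hbr : forall g mu eta, act g (mu + eta) = act g mu - act g 0 + act g eta)
  (hrt : forall x y, exists h, ract x h = y)
  (hcomp : forall g h eta, act g (ract eta h) = ract (act g eta) h)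
  (hab : forall g h eta,
     - act g 0 + act g (- eta + ract eta h - ract 0 h) - (- eta + ract eta h - ract 0 h)
     = - (- act g 0 + act g eta - eta) + ract (- act g 0 + act g eta - eta) h - ract 0 h) :
  forall eta mu h, ract (eta + mu) h = ract eta h - ract 0 h + ract mu h.
Proof.
pose gx x := projT1 (cid (htr 0 x)).
have hgx : forall x, act (gx x) 0 = x by move=> x; exact: (projT2 (cid (htr 0 x))).
pose l x z := - x + act (gx x) z - z.
have lE : forall x z, l x z = - x + act (gx x) z - z by [].
clearbody l.
have WD : forall g z, l (act g 0) z = - act g 0 + act g z - z.
  move=> g z; have [h hh] := hrt 0 z.
  by rewrite !lE -hh !hcomp hgx.
have actE : forall x z, act (gx x) z = x + z + l x z.
  by move=> x z; rewrite lE addrC -addrA (addrCA (- z)) addNr addr0 addrC addNKr.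
have hl : forall x y z, l x (y + z) = l x y + l x z.
  move=> x y z; rewrite !lE hbr hgx.
  by rewrite opprD [RHS]addrACA !addrA.
have h0 : forall z, l 0 z = 0.
  by move=> z; have := WD eG z; rewrite !hact1 oppr0 add0r subrr.
have hG : forall x y z, l (x + y + l x y) z = l x z + l y z + l x (l y z).
  move=> x y z.
  have e : act (mulG (gx x) (gx y)) 0 = x + y + l x y by rewrite hactM hgx actE.
  rewrite -e WD e !hactM !actE !hl.
  by zprep; zc x; zc y; zc z; zc (l x y); zc (l x z); zc (l y z); zc (l x (l y z)).
have simp : forall w z, - w + (w + z + l w z) - z = l w z.
  by move=> w z; zprep; zc w; zc z; zc (l w z).
have hA : forall x y z, l (l x y) z = l x (l y z).
  move=> x y z; have [h hh] := hrt 0 z.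
  have r : forall w, ract w h = w + z + l w z.
    by move=> w; rewrite -actE -hh hcomp hgx.
  have := hab (gx x) h y.
  rewrite hgx hh !r -lE !simp -lE => ->.
  by [].
have hI : forall x w, exists b, b + l x b = w.
  move=> x w; exists (act (invG (gx x)) (w + x)).
  rewrite lE -hactM hinv hact1.
  by zprep; zc (act (invG (gx x)) (w + x)); zc x; zc w.
have hE : forall b, exists c, c + l c b = b.
  move=> b; have [g hg] := htr b (b + b).
  exists (act g 0); rewrite WD hg.
  by zprep; zc (act g 0); zc b.
have ladd := @abstract_additive V l hl h0 hG hA hI hE.
move=> eta mu h.
set c := ract 0 h.
have r : forall w, ract w h = w + c + l w c.
  by move=> w; rewrite -actE /c hcomp hgx.
rewrite !r ladd.
by zprep; zc eta; zc mu; zc c; zc (l eta c); zc (l mu c).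
Qed.

Record AbGrp := AG {
  ag_car : Type; ag_add : ag_car -> ag_car -> ag_car; ag_zero : ag_car; ag_opp : ag_car -> ag_car;
  ag_assoc : associative ag_add; ag_comm : commutative ag_add;
  ag_add0 : left_id ag_zero ag_add; ag_addN : left_inverse ag_zero ag_opp ag_add }.
Definition agT (A : AbGrp) : Type := ag_car A.
HB.instance Definition _ (A : AbGrp) := gen_eqMixin (agT A).
HB.instance Definition _ (A : AbGrp) := gen_choiceMixin (agT A).
HB.instance Definition _ (A : AbGrp) :=
  GRing.isZmodule.Build (agT A) (@ag_assoc A) (@ag_comm A) (@ag_add0 A) (@ag_addN A).

Import Pilot.Defs.

Theorem theorem3p6 (G H N : Type)
  (mulG : G -> G -> G) (eG : G) (invG : G -> G)
  (mulH : H -> H -> H) (eH : H) (invH : H -> H)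
  (star : N -> N -> N) (eN : N) (invN : N -> N)
  (act : G -> N -> N) (ract : N -> H -> N)
  (hL : left_bracoid mulG eG invG star eN invN act)
  (hH : is_group mulH eH invH)
  (hR : is_right_action mulH eH ract)
  (hRt : right_transitive ract)
  (hcomp : forall g h eta, act g (ract eta h) = ract (act g eta) h)
  (hab : forall g h eta,
     alpha star eN invN act g (beta star eN invN ract h eta)
     = beta star eN invN ract h (alpha star eN invN act g eta)) :
  two_sided_bracoid mulG eG invG act mulH eH invH ract star eN invN /\
  (forall eta mu h,
     ract (star eta mu) h = star (star (ract eta h) (invN (ract eN h))) (ract mu h)).
Proof.
have hL' := hL.
destruct hL as [[hGgrp [hNgrp [[hact1 hactM] [htr hbr]]]] hNab].
pose A := @AG N star eN invN (@grp_assoc _ _ _ _ hNgrp) hNab (@grp_mul1x _ _ _ _ hNgrp) (@grp_mulVx _ _ _ _ hNgrp).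
have key : forall eta mu h,
    ract (star eta mu) h = star (star (ract eta h) (invN (ract eN h))) (ract mu h).
  exact: (@core (agT A) G H mulG eG invG act ract hact1 hactM (@grp_mulxV _ _ _ _ hGgrp) htr hbr hRt hcomp hab).
split; last exact key.
split; first exact: (proj1 hL').
split; first by split; [exact hH | split; [exact hNgrp | split; [exact hR | split; [exact hRt | move=> h eta mu; exact: key]]]].
split; [exact hNab | exact hcomp].
Qed.
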